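(* Let $u$ be a smooth absolute $E_1$-minimizer on a domain of the $xy$-plane where $D\neq0$. Then $$-\alpha\,N(H)-\alpha H^2+2\alpha^2N(\theta)+\tfrac23H\,N^{\perp}N^{\perp}\theta+N^{\perp}N^{\perp}\alpha=-2\alpha\,N^{\perp}(\alpha).$$
   Context: Heisenberg group $H_1$ with contact form $\Theta=dt+x\,dy-y\,dx$; graph $t=u(x,y)$, $D=[(u_x-y)^2+(u_y+x)^2]^{1/2}$, $\cos\theta=(u_x-y)/D$, $\sin\theta=(u_y+x)/D$, $\alpha=-1/D$, $H=D^{-3}\{(u_y+x)^2u_{xx}-2(u_y+x)(u_x-y)u_{xy}+(u_x-y)^2u_{yy}\}$ (the $p$-mean curvature), $N^{\perp}=\sin\theta\,\partial_x-\cos\theta\,\partial_y$, $N=\cos\theta\,\partial_x+\sin\theta\,\partial_y$. Absolute $E_1$-minimizer: $-N^{\perp}\alpha+\frac12\alpha^2+\frac16H^2=0$ on the nonsingular domain. *)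

(* Defs.v *)
From Stdlib Require Import Reals.
From Coquelicot Require Import Coquelicot.
Open Scope R_scope.

Definition dx (f : R -> R -> R) : R -> R -> R :=
  fun x y => Derive (fun t => f t y) x.
Definition dy (f : R -> R -> R) : R -> R -> R :=
  fun x y => Derive (fun t => f x t) y.

Definition open2 (O : R -> R -> Prop) : Prop :=
  forall x y, O x y -> exists eps : R, 0 < eps /\
    forall x' y', Rabs (x' - x) < eps -> Rabs (y' - y) < eps -> O x' y'.

Fixpoint Ck (k : nat) (O : R -> R -> Prop) (f : R -> R -> R) : Prop :=
  match k with
  | O => forall x y, O x y -> continuity_2d_pt f x y
  | S m =>
      (forall x y, O x y ->
         ex_derive (fun t => f t y) x /\ ex_derive (fun t => f x t) y)
      /\ Ck m O f /\ Ck m O (dx f) /\ Ck m O (dy f)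
  end.

Definition smooth_on (O : R -> R -> Prop) (f : R -> R -> R) : Prop :=
  forall k, Ck k O f.

(* Quantities attached to the graph t = u(x,y) in H_1 *)
Definition Dfun (u : R -> R -> R) : R -> R -> R :=
  fun x y => sqrt ((dx u x y - y) ^ 2 + (dy u x y + x) ^ 2).

Definition cosT (u : R -> R -> R) : R -> R -> R :=
  fun x y => (dx u x y - y) / Dfun u x y.
Definition sinT (u : R -> R -> R) : R -> R -> R :=
  fun x y => (dy u x y + x) / Dfun u x y.

Definition alpha (u : R -> R -> R) : R -> R -> R :=
  fun x y => - 1 / Dfun u x y.

Definition Hcurv (u : R -> R -> R) : R -> R -> R :=
  fun x y =>
    / (Dfun u x y ^ 3) *
    ((dy u x y + x) ^ 2 * dx (dx u) x y
     - 2 * (dy u x y + x) * (dx u x y - y) * dx (dy u) x y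
     + (dx u x y - y) ^ 2 * dy (dy u) x y).

Definition Nvf (u : R -> R -> R) (f : R -> R -> R) : R -> R -> R :=
  fun x y => cosT u x y * dx f x y + sinT u x y * dy f x y.
Definition Nperp (u : R -> R -> R) (f : R -> R -> R) : R -> R -> R :=
  fun x y => sinT u x y * dx f x y - cosT u x y * dy f x y.

Definition E1_minimizer_eq (O : R -> R -> Prop) (u : R -> R -> R) : Prop :=
  forall x y, O x y ->
    - Nperp u (alpha u) x y + / 2 * (alpha u x y) ^ 2
      + / 6 * (Hcurv u x y) ^ 2 = 0.

(* Main.v *)
Require Import Defs.
From Stdlib Require Import Reals Lra.
From Coquelicot Require Import Coquelicot.
Open Scope R_scope.

Lemma locx (O : R -> R -> Prop) (F G : R -> R -> R) x y :
  open2 O -> O x y -> (forall a b, O a b -> F a b = G a b) ->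
  locally x (fun t => F t y = G t y).
Proof.
  intros HO H HFG. destruct (HO x y H) as [e [He Hf]].
  exists (mkposreal e He). intros t Ht. apply HFG, Hf.
  - exact Ht.
  - rewrite Rminus_eq_0, Rabs_R0; exact He.
Qed.

Lemma locy (O : R -> R -> Prop) (F G : R -> R -> R) x y :
  open2 O -> O x y -> (forall a b, O a b -> F a b = G a b) ->
  locally y (fun t => F x t = G x t).
Proof.
  intros HO H HFG. destruct (HO x y H) as [e [He Hf]].
  exists (mkposreal e He). intros t Ht. apply HFG, Hf.
  - rewrite Rminus_eq_0, Rabs_R0; exact He.
  - exact Ht.
Qed.

Lemma deriv_eq (F G : R -> R) x l1 l2 :
  locally x (fun t => F t = G t) -> is_derive F x l1 -> is_derive G x l2 -> l1 = l2.
Proof.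
  intros Hl H1 H2.
  apply (is_derive_ext_loc _ _ _ _ Hl) in H1.
  rewrite <- (is_derive_unique _ _ _ H1), <- (is_derive_unique _ _ _ H2). reflexivity.
Qed.

Lemma ex_loc (F G : R -> R) x :
  locally x (fun t => F t = G t) -> ex_derive G x -> ex_derive F x.
Proof.
  intros Hl H. apply (ex_derive_ext_loc G F). 2: exact H.
  eapply filter_imp. 2: exact Hl. intros t Ht; now rewrite Ht.
Qed.

Lemma sm_dx O f : smooth_on O f -> smooth_on O (dx f).
Proof. intros H k. exact (proj1 (proj2 (proj2 (H (S k))))). Qed.
Lemma sm_dy O f : smooth_on O f -> smooth_on O (dy f).
Proof. intros H k. exact (proj2 (proj2 (proj2 (H (S k))))). Qed.
Lemma sm_ex O f x y : smooth_on O f -> O x y ->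
  ex_derive (fun t => f t y) x /\ ex_derive (fun t => f x t) y.
Proof. intros H Hxy. exact (proj1 (H 1%nat) x y Hxy). Qed.
Lemma sm_cont O f x y : smooth_on O f -> O x y -> continuity_2d_pt f x y.
Proof. intros H Hxy. exact (H 0%nat x y Hxy). Qed.

Lemma schwarz_on O f x y : open2 O -> smooth_on O f -> O x y ->
  dx (dy f) x y = dy (dx f) x y.
Proof.
  intros HO Hf H. unfold dx, dy.
  apply Schwarz.
  - destruct (HO x y H) as [e [He Hq]]. exists (mkposreal e He).
    intros a b Ha Hb. specialize (Hq a b Ha Hb).
    pose proof (sm_ex _ _ _ _ Hf Hq) as [A B].
    pose proof (sm_ex _ _ _ _ (sm_dy _ _ Hf) Hq) as [C _].
    pose proof (sm_ex _ _ _ _ (sm_dx _ _ Hf) Hq) as [_ E].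
    repeat split; assumption.
  - exact (sm_cont _ _ _ _ (sm_dx _ _ (sm_dy _ _ Hf)) H).
  - exact (sm_cont _ _ _ _ (sm_dy _ _ (sm_dx _ _ Hf)) H).
Qed.

Lemma cs_deriv (u theta : R -> R -> R) (U : R -> R -> Prop) a b :
  open2 U -> smooth_on U theta ->
  (forall x y, U x y -> cos (theta x y) = cosT u x y /\ sin (theta x y) = sinT u x y) ->
  U a b ->
  (ex_derive (fun t => cosT u t b) a /\ dx (cosT u) a b = - sinT u a b * dx theta a b) /\
  (ex_derive (fun t => sinT u t b) a /\ dx (sinT u) a b = cosT u a b * dx theta a b) /\
  (ex_derive (fun t => cosT u a t) b /\ dy (cosT u) a b = - sinT u a b * dy theta a b) /\
  (ex_derive (fun t => sinT u a t) b /\ dy (sinT u) a b = cosT u a b * dy theta a b).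
Proof.
  intros HU Hth Hcs H.
  destruct (sm_ex _ _ _ _ Hth H) as [Ex Ey].
  destruct (Hcs a b H) as [Hc Hs].
  assert (Lc : forall x y, U x y -> cosT u x y = cos (theta x y))
    by (intros x y Hxy; symmetry; apply (Hcs x y Hxy)).
  assert (Ls : forall x y, U x y -> sinT u x y = sin (theta x y))
    by (intros x y Hxy; symmetry; apply (Hcs x y Hxy)).
  pose proof (locx _ _ _ a b HU H Lc) as Lcx.
  pose proof (locx _ _ _ a b HU H Ls) as Lsx.
  pose proof (locy _ _ _ a b HU H Lc) as Lcy.
  pose proof (locy _ _ _ a b HU H Ls) as Lsy.
  assert (D1 : is_derive (fun t => cos (theta t b)) a (- sinT u a b * dx theta a b))
    by (auto_derive; [auto | rewrite <- Hs; unfold dx; ring]).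
  assert (D2 : is_derive (fun t => sin (theta t b)) a (cosT u a b * dx theta a b))
    by (auto_derive; [auto | rewrite <- Hc; unfold dx; ring]).
  assert (D3 : is_derive (fun t => cos (theta a t)) b (- sinT u a b * dy theta a b))
    by (auto_derive; [auto | rewrite <- Hs; unfold dy; ring]).
  assert (D4 : is_derive (fun t => sin (theta a t)) b (cosT u a b * dy theta a b))
    by (auto_derive; [auto | rewrite <- Hc; unfold dy; ring]).
  repeat split.
  - eapply ex_loc. exact Lcx. eexists; exact D1.
  - eapply is_derive_unique, is_derive_ext_loc. 2: exact D1.
    eapply filter_imp. 2: exact Lcx. intros t Ht; now rewrite Ht.
  - eapply ex_loc. exact Lsx. eexists; exact D2.
  - eapply is_derive_unique, is_derive_ext_loc. 2: exact D2.
    eapply filter_imp. 2: exact Lsx. intros t Ht; now rewrite Ht.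
  - eapply ex_loc. exact Lcy. eexists; exact D3.
  - eapply is_derive_unique, is_derive_ext_loc. 2: exact D3.
    eapply filter_imp. 2: exact Lcy. intros t Ht; now rewrite Ht.
  - eapply ex_loc. exact Lsy. eexists; exact D4.
  - eapply is_derive_unique, is_derive_ext_loc. 2: exact D4.
    eapply filter_imp. 2: exact Lsy. intros t Ht; now rewrite Ht.
Qed.

Lemma Dsq (u : R -> R -> R) a b :
  Dfun u a b ^ 2 = (dx u a b - b) ^ 2 + (dy u a b + a) ^ 2.
Proof.
  unfold Dfun. rewrite pow2_sqrt; [reflexivity|].
  apply Rplus_le_le_0_compat; apply pow2_ge_0.
Qed.

Lemma DL (u : R -> R -> R) a b : Dfun u a b <> 0 ->
  Dfun u a b = (dx u a b - b) * cosT u a b + (dy u a b + a) * sinT u a b.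
Proof.
  intros HD. unfold cosT, sinT.
  transitivity (((dx u a b - b) ^ 2 + (dy u a b + a) ^ 2) / Dfun u a b).
  - rewrite <- Dsq. field. exact HD.
  - field. exact HD.
Qed.

Lemma first_order (Omega : R -> R -> Prop) (u : R -> R -> R) (U : R -> R -> Prop) (theta : R -> R -> R) a b :
    open2 Omega ->
    smooth_on Omega u ->
    (forall x y, Omega x y -> Dfun u x y <> 0) ->
      open2 U ->
      (forall x y, U x y -> Omega x y) ->
      smooth_on U theta ->
      (forall x y, U x y ->
         cos (theta x y) = cosT u x y /\ sin (theta x y) = sinT u x y) ->
      U a b ->
  Hcurv u a b = - Nperp u theta a b /\
  Nperp u (alpha u) a b = 2 * alpha u a b ^ 2 + alpha u a b * Nvf u theta a b /\
  ex_derive (fun t => alpha u t b) a /\ ex_derive (fun t => alpha u a t) b.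
Proof.
  intros HO Hu HD HU HUO Hth Hcs H.
  pose proof (HUO a b H) as HOab.
  pose proof (HD a b HOab) as HDab.
  destruct (cs_deriv u theta U a b HU Hth Hcs H) as [[Ecx Dcx] [[Esx Dsx] [[Ecy Dcy] [Esy Dsy]]]].
  destruct (sm_ex _ _ _ _ (sm_dx _ _ Hu) HOab) as [Exx Exy].
  destruct (sm_ex _ _ _ _ (sm_dy _ _ Hu) HOab) as [Eyx Eyy].
  assert (LD : forall x y, Omega x y -> Dfun u x y =
     (dx u x y - y) * cosT u x y + (dy u x y + x) * sinT u x y)
    by (intros x y Hxy; apply DL, HD, Hxy).
  assert (LP1 : forall x y, Omega x y -> dx u x y - y = Dfun u x y * cosT u x y)
    by (intros x y Hxy; unfold cosT; field; apply HD, Hxy).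
  assert (LP2 : forall x y, Omega x y -> dy u x y + x = Dfun u x y * sinT u x y)
    by (intros x y Hxy; unfold sinT; field; apply HD, Hxy).
  assert (EDx : ex_derive (fun t => Dfun u t b) a).
  { eapply ex_loc. exact (locx _ _ _ a b HO HOab LD).
    auto_derive. repeat split; auto. }
  assert (EDy : ex_derive (fun t => Dfun u a t) b).
  { eapply ex_loc. exact (locy _ _ _ a b HO HOab LD).
    auto_derive. repeat split; auto. }
  assert (E1x : dx (dx u) a b = dx (Dfun u) a b * cosT u a b + Dfun u a b * dx (cosT u) a b).
  { apply (deriv_eq (fun t => dx u t b - b) (fun t => Dfun u t b * cosT u t b) a).
    - exact (locx _ _ _ a b HO HOab LP1).
    - auto_derive; [auto | unfold dx; ring].
    - auto_derive; [auto | unfold dx; ring]. }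
  assert (E1y : dy (dx u) a b - 1 = dy (Dfun u) a b * cosT u a b + Dfun u a b * dy (cosT u) a b).
  { apply (deriv_eq (fun t => dx u a t - t) (fun t => Dfun u a t * cosT u a t) b).
    - exact (locy _ _ _ a b HO HOab LP1).
    - auto_derive; [auto | unfold dy; ring].
    - auto_derive; [auto | unfold dy; ring]. }
  assert (E2x : dx (dy u) a b + 1 = dx (Dfun u) a b * sinT u a b + Dfun u a b * dx (sinT u) a b).
  { apply (deriv_eq (fun t => dy u t b + t) (fun t => Dfun u t b * sinT u t b) a).
    - exact (locx _ _ _ a b HO HOab LP2).
    - auto_derive; [auto | unfold dx; ring].
    - auto_derive; [auto | unfold dx; ring]. }
  assert (E2y : dy (dy u) a b = dy (Dfun u) a b * sinT u a b + Dfun u a b * dy (sinT u) a b).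
  { apply (deriv_eq (fun t => dy u a t + a) (fun t => Dfun u a t * sinT u a t) b).
    - exact (locy _ _ _ a b HO HOab LP2).
    - auto_derive; [auto | unfold dy; ring].
    - auto_derive; [auto | unfold dy; ring]. }
  assert (Sch : dx (dy u) a b = dy (dx u) a b) by exact (schwarz_on _ _ _ _ HO Hu HOab).
  assert (Ax : is_derive (fun t => alpha u t b) a (dx (Dfun u) a b / Dfun u a b ^ 2)).
  { unfold alpha. auto_derive; [auto | unfold dx; field; exact HDab]. }
  assert (Ay : is_derive (fun t => alpha u a t) b (dy (Dfun u) a b / Dfun u a b ^ 2)).
  { unfold alpha. auto_derive; [auto | unfold dy; field; exact HDab]. }
  assert (Cs : cosT u a b ^ 2 + sinT u a b ^ 2 = 1).
  { destruct (Hcs a b H) as [<- <-]. rewrite <- (sin2_cos2 (theta a b)). unfold Rsqr. ring. }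
  assert (HP1 := LP1 a b HOab). assert (HP2 := LP2 a b HOab).
  split; [|split; [|split]].
  - unfold Hcurv, Nperp. rewrite HP1, HP2.
    rewrite Dcx, Dsx, Dcy, Dsy in *.
    rewrite E1x, E2y.
    replace (dx (dy u) a b) with (((dx (Dfun u) a b * sinT u a b + Dfun u a b * (cosT u a b * dx theta a b)) - 1
        + (dy (Dfun u) a b * cosT u a b + Dfun u a b * (- sinT u a b * dy theta a b)) + 1) / 2) by lra.
    transitivity (- (sinT u a b * dx theta a b - cosT u a b * dy theta a b) * (cosT u a b ^ 2 + sinT u a b ^ 2)).
    + field. exact HDab.
    + rewrite Cs. ring.
  - assert (Dax : dx (alpha u) a b = dx (Dfun u) a b / Dfun u a b ^ 2) by exact (is_derive_unique _ _ _ Ax).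
    assert (Day : dy (alpha u) a b = dy (Dfun u) a b / Dfun u a b ^ 2) by exact (is_derive_unique _ _ _ Ay).
    unfold Nperp at 1. rewrite Dax, Day.
    unfold Nvf, alpha. rewrite Dcx, Dsx, Dcy, Dsy in *.
    assert (K : sinT u a b * dx (Dfun u) a b - cosT u a b * dy (Dfun u) a b
               = 2 - Dfun u a b * (cosT u a b * dx theta a b + sinT u a b * dy theta a b)) by nra.
    transitivity ((sinT u a b * dx (Dfun u) a b - cosT u a b * dy (Dfun u) a b) / Dfun u a b ^ 2).
    + field. exact HDab.
    + rewrite K. field. exact HDab.
  - eexists; exact Ax.
  - eexists; exact Ay.
Qed.

Lemma loc_isd (F G : R -> R) x l :
  locally x (fun t => F t = G t) -> is_derive G x l -> is_derive F x l.
Proof.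
  intros Hl H. apply (is_derive_ext_loc G F). 2: exact H.
  eapply filter_imp. 2: exact Hl. intros t Ht; now rewrite Ht.
Qed.

Lemma isd_dx F x y l : is_derive (fun t => F t y) x l -> dx F x y = l.
Proof. apply is_derive_unique. Qed.
Lemma isd_dy F x y l : is_derive (fun t => F x t) y l -> dy F x y = l.
Proof. apply is_derive_unique. Qed.

Theorem proposition3p2 :
  forall (Omega : R -> R -> Prop) (u : R -> R -> R),
    open2 Omega ->
    smooth_on Omega u ->
    (forall x y, Omega x y -> Dfun u x y <> 0) ->
    E1_minimizer_eq Omega u ->
    (* θ: any smooth local determination of the angle on an open U ⊆ Omega *)
    forall (U : R -> R -> Prop) (theta : R -> R -> R),
      open2 U ->
      (forall x y, U x y -> Omega x y) ->
      smooth_on U theta ->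
      (forall x y, U x y ->
         cos (theta x y) = cosT u x y /\ sin (theta x y) = sinT u x y) ->
      forall x y, U x y ->
        - alpha u x y * Nvf u (Hcurv u) x y
        - alpha u x y * (Hcurv u x y) ^ 2
        + 2 * (alpha u x y) ^ 2 * Nvf u theta x y
        + 2 / 3 * Hcurv u x y * Nperp u (Nperp u theta) x y
        + Nperp u (Nperp u (alpha u)) x y
        = - 2 * alpha u x y * Nperp u (alpha u) x y.
Proof.
  intros Omega u HO Hu HD HE U theta HU HUO Hth Hcs x y H.
  pose proof (fun a b Hab => first_order Omega u U theta a b HO Hu HD HU HUO Hth Hcs Hab) as FO.
  assert (R1 : forall a b, U a b -> Hcurv u a b = - Nperp u theta a b)
    by (intros a b Hab; apply (FO a b Hab)).
  assert (R2 : forall a b, U a b -> Nperp u (alpha u) a b =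
            2 * alpha u a b ^ 2 + alpha u a b * Nvf u theta a b)
    by (intros a b Hab; apply (FO a b Hab)).
  assert (R3 : forall a b, U a b -> Nperp u (alpha u) a b =
            / 2 * alpha u a b ^ 2 + / 6 * Nperp u theta a b ^ 2).
  { intros a b Hab. pose proof (HE a b (HUO a b Hab)) as E. rewrite R1 in E by exact Hab.
    assert (Sq : (- Nperp u theta a b) ^ 2 = Nperp u theta a b ^ 2) by ring. lra. }
  destruct (FO x y H) as [_ [_ [Eax Eay]]].
  destruct (cs_deriv u theta U x y HU Hth Hcs H) as [[Ecx Dcx] [[Esx Dsx] [[Ecy Dcy] [Esy Dsy]]]].
  destruct (sm_ex _ _ _ _ Hth H) as [Etx Ety].
  destruct (sm_ex _ _ _ _ (sm_dx _ _ Hth) H) as [Etxx Etxy].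
  destruct (sm_ex _ _ _ _ (sm_dy _ _ Hth) H) as [Etyx Etyy].
  assert (Sch : dx (dy theta) x y = dy (dx theta) x y) by exact (schwarz_on _ _ _ _ HU Hth H).
  assert (F1x : is_derive (fun t => Nperp u theta t y) x
     (dx (sinT u) x y * dx theta x y + sinT u x y * dx (dx theta) x y
      - (dx (cosT u) x y * dy theta x y + cosT u x y * dx (dy theta) x y))).
  { unfold Nperp. auto_derive; [auto | unfold dx, dy; ring]. }
  assert (F1y : is_derive (fun t => Nperp u theta x t) y
     (dy (sinT u) x y * dx theta x y + sinT u x y * dy (dx theta) x y
      - (dy (cosT u) x y * dy theta x y + cosT u x y * dy (dy theta) x y))).
  { unfold Nperp. auto_derive; [auto | unfold dx, dy; ring]. }
  assert (F2x : is_derive (fun t => Nvf u theta t y) x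
     (dx (cosT u) x y * dx theta x y + cosT u x y * dx (dx theta) x y
      + (dx (sinT u) x y * dy theta x y + sinT u x y * dx (dy theta) x y))).
  { unfold Nvf. auto_derive; [auto | unfold dx, dy; ring]. }
  assert (F2y : is_derive (fun t => Nvf u theta x t) y
     (dy (cosT u) x y * dx theta x y + cosT u x y * dy (dx theta) x y
      + (dy (sinT u) x y * dy theta x y + sinT u x y * dy (dy theta) x y))).
  { unfold Nvf. auto_derive; [auto | unfold dx, dy; ring]. }
  assert (Hx : is_derive (fun t => Hcurv u t y) x (- dx (Nperp u theta) x y)).
  { eapply loc_isd. exact (locx _ _ _ x y HU H R1).
    auto_derive; [eexists; exact F1x | unfold dx; ring]. }
  assert (Hy : is_derive (fun t => Hcurv u x t) y (- dy (Nperp u theta) x y)).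
  { eapply loc_isd. exact (locy _ _ _ x y HU H R1).
    auto_derive; [eexists; exact F1y | unfold dy; ring]. }
  assert (Px : is_derive (fun t => Nperp u (alpha u) t y) x
     (alpha u x y * dx (alpha u) x y + / 3 * Nperp u theta x y * dx (Nperp u theta) x y)).
  { eapply loc_isd. exact (locx _ _ _ x y HU H R3).
    auto_derive; [repeat split; first [assumption | eexists; eassumption] | unfold dx; field]. }
  assert (Py : is_derive (fun t => Nperp u (alpha u) x t) y
     (alpha u x y * dy (alpha u) x y + / 3 * Nperp u theta x y * dy (Nperp u theta) x y)).
  { eapply loc_isd. exact (locy _ _ _ x y HU H R3).
    auto_derive; [repeat split; first [assumption | eexists; eassumption] | unfold dy; field]. }
  assert (Qx : alpha u x y * dx (alpha u) x y + / 3 * Nperp u theta x y * dx (Nperp u theta) x y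
     = 4 * alpha u x y * dx (alpha u) x y + dx (alpha u) x y * Nvf u theta x y
       + alpha u x y * dx (Nvf u theta) x y).
  { eapply deriv_eq. exact (locx _ _ _ x y HU H R2). exact Px.
    auto_derive; [repeat split; first [assumption | eexists; eassumption] | unfold dx; ring]. }
  assert (Qy : alpha u x y * dy (alpha u) x y + / 3 * Nperp u theta x y * dy (Nperp u theta) x y
     = 4 * alpha u x y * dy (alpha u) x y + dy (alpha u) x y * Nvf u theta x y
       + alpha u x y * dy (Nvf u theta) x y).
  { eapply deriv_eq. exact (locy _ _ _ x y HU H R2). exact Py.
    auto_derive; [repeat split; first [assumption | eexists; eassumption] | unfold dy; ring]. }
  apply (isd_dx (Nperp u theta)) in F1x.
  apply (isd_dy (Nperp u theta)) in F1y.
  apply (isd_dx (Nvf u theta)) in F2x.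
  apply (isd_dy (Nvf u theta)) in F2y.
  apply (isd_dx (Hcurv u)) in Hx.
  apply (isd_dy (Hcurv u)) in Hy.
  apply (isd_dx (Nperp u (alpha u))) in Px.
  apply (isd_dy (Nperp u (alpha u))) in Py.
  rewrite Dcx, Dsx, Dcy, Dsy, Sch in *.
  pose proof (R1 x y H) as H1. pose proof (R2 x y H) as H2.
  unfold Nvf, Nperp in *.
  rewrite H1, Hx, Hy, Px, Py.
  set (c := cosT u x y) in *. set (s := sinT u x y) in *.
  set (al := alpha u x y) in *. set (ax := dx (alpha u) x y) in *. set (ay := dy (alpha u) x y) in *.
  set (tx := dx theta x y) in *. set (ty := dy theta x y) in *.
  set (txx := dx (dx theta) x y) in *. set (txy := dy (dx theta) x y) in *. set (tyy := dy (dy theta) x y) in *.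
  rewrite F1x, F1y. rewrite F1x, F2x in Qx. rewrite F1y, F2y in Qy.
  assert (Q : s * (al * ax + / 3 * (s * tx - c * ty) * (c * tx * tx + s * txx - (- s * tx * ty + c * txy)))
            - c * (al * ay + / 3 * (s * tx - c * ty) * (c * ty * tx + s * txy - (- s * ty * ty + c * tyy)))
            = s * (4 * al * ax + ax * (c * tx + s * ty) + al * (- s * tx * tx + c * txx + (c * tx * ty + s * txy)))
            - c * (4 * al * ay + ay * (c * tx + s * ty) + al * (- s * ty * tx + c * txy + (c * ty * ty + s * tyy))))
    by (rewrite Qx, Qy; reflexivity).
  assert (P : (c * tx + s * ty) * (s * ax - c * ay) = (c * tx + s * ty) * (2 * al ^ 2 + al * (c * tx + s * ty)))
    by (rewrite H2; reflexivity).
  assert (P2 : al * (s * ax - c * ay) = al * (2 * al ^ 2 + al * (c * tx + s * ty)))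
    by (rewrite H2; reflexivity).
  clear - Q P P2. nra.
Qed.
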